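(* Let $B>0$, $C>0$ and $\gamma\in[0,1]$ be fixed. For $\alpha\in[0,1/2]$ define $$b_{a}(\alpha)=\frac{\left(-2\alpha^4+5\alpha^3-4\alpha^2+\alpha\right)\gamma+4\alpha^4-9\alpha^3+4\alpha^2}{2\alpha^3-4\alpha^2+1},$$ $$b_{h}(\alpha)=\frac{\left(2\alpha^4-5\alpha^3+4\alpha^2-\alpha\right)\gamma-4\alpha^4+10\alpha^3-6\alpha^2-\alpha+1}{2\alpha^3-4\alpha^2+1},$$ and set $B_{\mathrm{attacker}}(\alpha)=B\,b_a(\alpha)$, $B_{\mathrm{honest}}(\alpha)=B\,b_h(\alpha)$. For $M>0$ and $H>0$ let $\alpha=\frac{M}{H+M}$ and define $$\mathcal{U}^S(H)=B\,\frac{B_{\mathrm{honest}}(\alpha)}{(1-\alpha)B}\cdot\frac{B}{\left(B_{\mathrm{attacker}}(\alpha)+B_{\mathrm{honest}}(\alpha)\right)(H+M)}-C.$$ Then there exists $M_{\max}$ (depending on $\gamma$, $B$, $C$) such that, for $M>0$, there exists $H^*$ with $H^*>M$ and $\mathcal{U}^S(H^* )=0$ if and only if $M\le M_{\max}$.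
   Context: Model of selfish mining (in the sense of Eyal and Sirer) with elastic hash supply. $B$ is the expected reward per block, $C$ the expected cost of mining per unit of hash rate until some miner finds a block, $H$ the total hash rate of honest miners, $M$ the hash rate of the selfish-mining attacking pool, $\gamma$ the fraction of honest miners that mine on the attacking pool's block during a tie. $\alpha=M/(H+M)$ is the attacker's share of total hash rate. $B_{\mathrm{attacker}}$ and $B_{\mathrm{honest}}$ are the expected rewards of the attacker and honest miners per block discovery (including hidden ones), and $\mathcal{U}^S(H)$ is the honest miners' profit per unit hash rate under the selfish mining attack after difficulty adjustment. An equilibrium honest hash supply is a value $H^*$ with $\mathcal{U}^S(H^* )=0$. *)

(* Defs.v *)
From Stdlib Require Import Reals.
Open Scope R_scope.

Definition b_a (gamma alpha : R) : R :=
  ((-2*alpha^4 + 5*alpha^3 - 4*alpha^2 + alpha) * gamma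
     + 4*alpha^4 - 9*alpha^3 + 4*alpha^2)
  / (2*alpha^3 - 4*alpha^2 + 1).

Definition b_h (gamma alpha : R) : R :=
  ((2*alpha^4 - 5*alpha^3 + 4*alpha^2 - alpha) * gamma
     - 4*alpha^4 + 10*alpha^3 - 6*alpha^2 - alpha + 1)
  / (2*alpha^3 - 4*alpha^2 + 1).

Definition B_attacker (B gamma alpha : R) : R := B * b_a gamma alpha.
Definition B_honest (B gamma alpha : R) : R := B * b_h gamma alpha.

Definition alpha_of (M H : R) : R := M / (H + M).

Definition U_S (B C gamma M H : R) : R :=
  let alpha := alpha_of M H in
  B * (B_honest B gamma alpha / ((1 - alpha) * B))
    * (B / ((B_attacker B gamma alpha + B_honest B gamma alpha) * (H + M)))
  - C.

(* Main.v *)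
Require Import Defs.
From Stdlib Require Import Reals Lra Psatz Ranalysis5 Rtopology.
Open Scope R_scope.

Definition Nh (gamma a : R) : R :=
  (2*a^4 - 5*a^3 + 4*a^2 - a) * gamma - 4*a^4 + 10*a^3 - 6*a^2 - a + 1.
Definition Sp (a : R) : R := a^3 - 2*a^2 - a + 1.
Definition gf (B C gamma a : R) : R :=
  (B * a * Nh gamma a) / (C * ((1 - a) * Sp a)).

Lemma Sp_pos a : 0 <= a <= 1/2 -> 0 < Sp a.
Proof. intros. unfold Sp. nra. Qed.

Lemma D_pos a : 0 <= a <= 1/2 -> 0 < 2*a^3 - 4*a^2 + 1.
Proof. intros. nra. Qed.

Lemma Nh_pos gamma a : 0 <= gamma <= 1 -> 0 < a < 1/2 -> 0 < Nh gamma a.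
Proof.
  intros Hg Ha.
  assert (E : Nh gamma a = (1 - 2*a) * ((2*a^3 - 4*a^2 + a + 1) - gamma * (a * (1-a)^2)))
    by (unfold Nh; ring).
  rewrite E. apply Rmult_lt_0_compat; [lra|].
  assert (0 <= a * (1-a)^2) by (apply Rmult_le_pos; nra).
  assert (gamma * (a * (1-a)^2) <= a * (1-a)^2) by nra.
  nra.
Qed.

Lemma Nh_half gamma : Nh gamma (1/2) = 0.
Proof. unfold Nh. field. Qed.

Lemma key B C gamma a M X : 0 < B -> 0 < C -> 0 < a < 1/2 -> 0 < M -> X = M / a ->
  B * (B_honest B gamma a / ((1 - a) * B))
    * (B / ((B_attacker B gamma a + B_honest B gamma a) * X)) - C
  = C * (gf B C gamma a - M) / M.
Proof.
  intros HB HC Ha HM HX. subst X.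
  assert (HS := Sp_pos a ltac:(lra)). assert (HD := D_pos a ltac:(lra)).
  assert (Esum : B_attacker B gamma a + B_honest B gamma a
     = B * (Sp a / (2*a^3 - 4*a^2 + 1))).
  { unfold B_attacker, B_honest, b_a, b_h, Sp. field. apply Rgt_not_eq; exact HD. }
  rewrite Esum. unfold B_honest, b_h, gf. fold (Nh gamma a).
  unfold Nh. field. repeat split; try apply Rgt_not_eq; try exact HD; try exact HS; lra.
Qed.

Lemma gf_cont B C gamma a : 0 < C -> 0 <= a <= 1/2 -> continuity_pt (gf B C gamma) a.
Proof.
  intros HC Ha. assert (HS := Sp_pos a Ha). unfold gf, Nh, Sp in *.
  reg. apply Rmult_integral_contrapositive; split; [lra|].
  apply Rmult_integral_contrapositive; split; lra.
Qed.

Theorem theorem1 (B C gamma : R) (hB : 0 < B) (hC : 0 < C)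
  (hg0 : 0 <= gamma) (hg1 : gamma <= 1) :
  exists Mmax : R, forall M : R, 0 < M ->
    ((exists Hs : R, Hs > M /\ U_S B C gamma M Hs = 0) <-> M <= Mmax).
Proof.
  destruct (continuity_ab_maj (gf B C gamma) 0 (1/2) ltac:(lra)
     (fun c Hc => gf_cont B C gamma c hC Hc)) as [xm [Hmax Hxm]].
  exists (gf B C gamma xm). intros M HM.
  assert (US : forall Hs, Hs > M ->
     U_S B C gamma M Hs = C * (gf B C gamma (alpha_of M Hs) - M) / M).
  { intros Hs HHs. unfold U_S; cbv zeta. apply key; auto.
    unfold alpha_of. split.
    - apply Rdiv_lt_0_compat; lra.
    - apply Rmult_lt_reg_r with (Hs + M); [lra|].
      unfold Rdiv. rewrite Rmult_assoc, Rinv_l; lra.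
    - unfold alpha_of. field. split; lra. }
  split.
  - intros [Hs [HHs HU]]. rewrite US in HU by exact HHs.
    assert (Ha : 0 < alpha_of M Hs < 1/2).
    { unfold alpha_of. split.
      - apply Rdiv_lt_0_compat; lra.
      - apply Rmult_lt_reg_r with (Hs + M); [lra|].
        unfold Rdiv. rewrite Rmult_assoc, Rinv_l; lra. }
    assert (E : gf B C gamma (alpha_of M Hs) = M).
    { assert (C * (gf B C gamma (alpha_of M Hs) - M) = 0).
      { apply Rmult_eq_reg_r with (/ M).
        - rewrite Rmult_0_l. exact HU.
        - apply Rinv_neq_0_compat; lra. }
      destruct (Rmult_integral _ _ H); lra. }
    rewrite <- E. apply Hmax. lra.
  - intros HMle.
    assert (Hg0 : gf B C gamma 0 = 0) by (unfold gf; rewrite Rmult_0_r, Rmult_0_l; unfold Rdiv; apply Rmult_0_l).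
    assert (Hgh : gf B C gamma (1/2) = 0) by (unfold gf; rewrite Nh_half, Rmult_0_r; unfold Rdiv; apply Rmult_0_l).
    assert (Hxm2 : 0 < xm < 1/2).
    { destruct Hxm as [H1 H2]. split.
      - destruct H1 as [H1|H1]; [exact H1|]. subst xm. lra.
      - destruct H2 as [H2|H2]; [exact H2|]. rewrite H2 in HMle. lra. }
    assert (Hz : exists z, 0 < z < 1/2 /\ gf B C gamma z = M).
    { destruct HMle as [Hlt|Heq].
      - destruct (IVT_interv (fun x => gf B C gamma x - M) 0 xm) as [z [Hz1 Hz2]].
        + intros c Hc. apply continuity_pt_minus.
          * apply gf_cont; [exact hC | lra].
          * apply continuity_pt_const. intros u v; reflexivity.
        + lra.
        + simpl. lra.
        + simpl. lra.
        + exists z. simpl in Hz2. split; [|lra].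
          split; [|lra]. destruct Hz1 as [[H1|H1] _]; [exact H1|].
          subst z. lra.
      - exists xm. split; [exact Hxm2 | symmetry; exact Heq]. }
    destruct Hz as [z [Hz1 Hz2]].
    exists (M / z - M).
    assert (Hgt : M / z - M > M).
    { assert (M / z > 2 * M).
      { apply Rmult_lt_reg_r with z; [lra|].
        replace (M / z * z) with M by (field; lra). nra. }
      lra. }
    split; [exact Hgt|].
    rewrite US by exact Hgt.
    assert (Ea : alpha_of M (M / z - M) = z).
    { unfold alpha_of. field. lra. }
    rewrite Ea, Hz2. unfold Rdiv. rewrite Rminus_diag, Rmult_0_r. apply Rmult_0_l.
Qed.
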